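(* Let $n$ be a positive integer and let $\xi>2$ be an integer. If $C_{\xi}(n)\neq\emptyset$, then $\xi\le \log_2(n+1)+1$.
   Context: A partition of $n$ is identified with a point $x=(x_1,\dots,x_n)\in\mathbb{Z}_{\ge 0}^n$ satisfying $x_1+2x_2+\dots+nx_n=n$, where $x_i$ is the number of parts equal to $i$. Let $P(n)$ be the set of partitions of $n$ and $P_n=\mathrm{conv}\,P(n)\subset\mathbb{R}^n$, with vertex set $\mathrm{Vert}\,P_n$. For $x\in P(n)\setminus \mathrm{Vert}\,P_n$, let $\xi(x)$ be the minimal number $k$ such that $x=\sum_{j=1}^k\lambda_j y^j$ with $y^1,\dots,y^k\in P(n)$ all different from $x$, $\lambda_j>0$, $\sum_j\lambda_j=1$. For an integer $\xi\ge 2$, $C_\xi(n)$ denotes the set of partitions $x\in P(n)\setminus\mathrm{Vert}\,P_n$ with $\xi(x)=\xi$. *)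

(* Defs.v *)
From mathcomp Require Import all_boot all_order all_algebra.
From mathcomp Require Import reals exp.
Set Implicit Arguments. Unset Strict Implicit. Unset Printing Implicit Defensive.
Import Order.TTheory GRing.Theory Num.Theory.
Local Open Scope ring_scope.

(* A partition of n is a point x in Z_{>=0}^n, coordinate i : 'I_n standing
   for the part size i+1, with x_1 + 2 x_2 + ... + n x_n = n. *)
Definition is_partition (n : nat) (x : 'I_n -> nat) : Prop :=
  (\sum_(i < n) (i.+1 * x i))%N = n.

Definition ptR {R : realType} (n : nat) (x : 'I_n -> nat) : 'I_n -> R :=
  fun i => (x i)%:R.

Definition in_Pn {R : realType} (n : nat) (p : 'I_n -> R) : Prop :=
  exists (k : nat) (y : 'I_k -> 'I_n -> nat) (lam : 'I_k -> R),
    (forall j, is_partition (y j)) /\ (forall j, 0 <= lam j) /\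
    \sum_(j < k) lam j = 1 /\
    (forall i, p i = \sum_(j < k) lam j * ptR (y j) i).

Definition is_vertex {R : realType} (n : nat) (x : 'I_n -> nat) : Prop :=
  in_Pn (ptR (R := R) x) /\
  forall (p q : 'I_n -> R) (t : R), in_Pn p -> in_Pn q -> 0 < t < 1 ->
    (forall i, ptR x i = t * p i + (1 - t) * q i) -> p = q.

Definition conv_rep {R : realType} (n k : nat) (x : 'I_n -> nat) : Prop :=
  exists (y : 'I_k -> 'I_n -> nat) (lam : 'I_k -> R),
    (forall j, is_partition (y j)) /\ (forall j, y j <> x) /\
    (forall j, 0 < lam j) /\ \sum_(j < k) lam j = 1 /\
    (forall i, ptR x i = \sum_(j < k) lam j * ptR (y j) i).

Definition xi_eq {R : realType} (n : nat) (x : 'I_n -> nat) (k : nat) : Prop :=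
  conv_rep (R := R) k x /\ forall m, (m < k)%N -> ~ conv_rep (R := R) m x.

Definition C_xi {R : realType} (n xi : nat) (x : 'I_n -> nat) : Prop :=
  is_partition x /\ ~ is_vertex (R := R) x /\ xi_eq (R := R) x xi.

(* Main.v *)
Require Import Defs.
From mathcomp Require Import all_boot all_order all_algebra.
From mathcomp Require Import reals exp.
From mathcomp Require Import ring lra zify.
Import Order.TTheory GRing.Theory Num.Theory.
Local Open Scope ring_scope.

Section Aux.
Variable R : realType.

Lemma compact n (x : 'I_n -> nat) k (y : 'I_k -> 'I_n -> nat) (lam : 'I_k -> R) :
 (forall j, is_partition (y j)) -> (forall j, y j <> x) -> (forall j, 0 <= lam j) ->
 \sum_(j < k) lam j = 1 -> (forall i, ptR x i = \sum_(j < k) lam j * ptR (y j) i) ->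
 conv_rep (R:=R) #|[set j | 0 < lam j]| x.
Proof.
move=> Hy Hne Hl Hs Hr.
set J := [set j | 0 < lam j].
have E : forall F : 'I_k -> R, (forall j, lam j = 0 -> F j = 0) ->
    \sum_(j < k) F j = \sum_(i < #|J|) F (enum_val i).
  move=> F HF; rewrite (bigID (fun j => j \in J)) /= [X in _ + X]big1 ?addr0.
    by rewrite (big_enum_val (A := mem J)).
  move=> j; rewrite inE => Hj; apply: HF.
  by apply/eqP; rewrite eq_le Hl andbT leNgt.
exists (fun i => y (enum_val i)), (fun i => lam (enum_val i)).
split; first by move=> i; apply: Hy.
split; first by move=> i; apply: Hne.
split; first by move=> i; have := enum_valP i; rewrite inE.
split; first by rewrite -Hs; apply/esym/E.
by move=> i; rewrite Hr; apply: E => j ->; rewrite mul0r.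
Qed.

Lemma reduce n (x : 'I_n -> nat) k (y : 'I_k -> 'I_n -> nat) (lam : 'I_k -> R)
  (u : 'I_k -> R) :
 (forall j, is_partition (y j)) -> (forall j, y j <> x) -> (forall j, 0 < lam j) ->
 \sum_(j < k) lam j = 1 -> (forall i, ptR x i = \sum_(j < k) lam j * ptR (y j) i) ->
 (exists j, u j != 0) -> \sum_(j < k) u j = 0 ->
 (forall i, \sum_(j < k) u j * ptR (y j) i = 0) ->
 exists m, (m < k)%N /\ conv_rep (R:=R) m x.
Proof.
move=> Hy Hne Hl Hs Hr [j1 Hj1] Hsu Hru.
have [j0 Hj0]: exists j0, 0 < u j0.
  case: (pickP (fun j => 0 < u j)) => [j0 H|Hn]; first by exists j0.
  exfalso; move: Hj1; apply/negP; rewrite negbK.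
  have Hn' : forall j, 0 <= - u j by move=> j; rewrite oppr_ge0 leNgt Hn.
  have := @psumr_eq0P _ _ predT (fun j => - u j) (fun j _ => Hn' j).
  rewrite sumrN Hsu oppr0 => /(_ erefl j1 isT) /eqP; by rewrite oppr_eq0.
case: (@arg_minP _ _ _ j0 (fun j => 0 < u j) (fun j => lam j / u j) Hj0) => jm Pjm Hmin.
set t := lam jm / u jm.
have t0 : 0 <= t by rewrite /t divr_ge0 // ltW.
set lam' := fun j => lam j - t * u j.
have Hl' : forall j, 0 <= lam' j.
  move=> j; rewrite /lam' subr_ge0.
  case: (ltP 0 (u j)) => h.
    by rewrite -ler_pdivlMr //; apply: Hmin.
  apply: le_trans (ltW (Hl j)); by rewrite mulr_ge0_le0.
have Hjm : lam' jm = 0.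
  by rewrite /lam' /t divfK ?subrr // gt_eqF.
have Hs' : \sum_(j < k) lam' j = 1.
  by rewrite /lam' sumrB -mulr_sumr Hsu mulr0 subr0.
have Hr' : forall i, ptR x i = \sum_(j < k) lam' j * ptR (y j) i.
  move=> i; rewrite Hr.
  have -> : \sum_(j < k) lam' j * ptR (y j) i =
     \sum_(j < k) (lam j * ptR (y j) i - t * (u j * ptR (y j) i)).
    by apply: eq_bigr => j _; rewrite /lam' mulrBl mulrA.
  by rewrite sumrB -mulr_sumr Hru mulr0 subr0.
have := @compact n x k y lam' Hy Hne Hl' Hs' Hr'.
set m := #|_| => Hc; exists m; split => //.
rewrite /m.
apply: (@leq_ltn_trans #|[set~ jm]|).
  apply: subset_leq_card; apply/subsetP => j; rewrite !inE; apply: contraTN.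
  by move=> /eqP ->; rewrite Hjm ltxx.
rewrite cardsC1 card_ord ltn_predL.
by apply: leq_ltn_trans (ltn_ord jm).
Qed.


Lemma support n (x : 'I_n -> nat) k (y : 'I_k -> 'I_n -> nat) (lam : 'I_k -> R) :
 (forall j, 0 < lam j) ->
 (forall i, ptR x i = \sum_(j < k) lam j * ptR (y j) i) ->
 forall i j, x i = 0%N -> y j i = 0%N.
Proof.
move=> Hl Hr i j Hx.
have H0 : \sum_(j < k) lam j * ptR (y j) i = 0 by rewrite -Hr /ptR Hx.
have := @psumr_eq0P _ _ predT (fun j => lam j * ptR (y j) i) _ H0 j isT.
move=> /(_ _)/eqP; rewrite mulf_eq0 (gt_eqF (Hl j)) /= /ptR pnatr_eq0 => /(_ _)/eqP.
apply => j' _; apply: mulr_ge0; [exact: ltW | exact: ler0n].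
Qed.

Lemma dim_bound n (x : 'I_n -> nat) k :
  xi_eq (R:=R) x k -> (k <= #|[set i | 0 < x i]%N|.+1)%N.
Proof.
case=> [[y [lam [Hy [Hne [Hl [Hs Hr]]]]]] Hmin].
set T := [set i | 0 < x i]%N.
rewrite leqNgt; apply/negP => Hk.
pose A : 'M[R]_(k, #|T|.+1) := \matrix_(j, c)
   match unlift ord_max c with Some c' => ptR (y j) (enum_val c') | None => 1 end.
have : (0 < \rank (kermx A))%N.
  by rewrite mxrank_ker subn_gt0; apply: leq_ltn_trans (rank_leq_col A) Hk.
rewrite lt0n mxrank_eq0 => HK.
have [r Hr0] : exists r, row r (kermx A) != 0.
  case: (pickP (fun r => row r (kermx A) != 0)) => [r H|H0]; first by exists r.
  exfalso; move: HK; apply/negP; rewrite negbK; apply/eqP/matrixP => a b.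
  have := H0 a; move/negbFE/eqP => E; have := congr1 (fun M : 'rV[R]_k => M 0 b) E.
  by rewrite !mxE.
set w := row r (kermx A).
have Hw : w *m A = 0 by rewrite /w -row_mul mulmx_ker row0.
have Hc : forall c, \sum_(j < k) w 0 j * A j c = 0.
  by move=> c; have := congr1 (fun M : 'M[R]_(1, #|T|.+1) => M 0 c) Hw; rewrite !mxE.
have HA1 : forall j, A j ord_max = 1 by move=> j; rewrite /A mxE unlift_none.
have HA2 : forall j c, A j (lift ord_max c) = ptR (y j) (enum_val c).
  by move=> j c; rewrite /A mxE liftK.
have [m [Hm Hcm]] : exists m, (m < k)%N /\ conv_rep (R:=R) m x.
  apply: (@reduce n x k y lam (fun j => w 0 j) Hy Hne Hl Hs Hr).
  - case: (pickP (fun j => w 0 j != 0)) => [j H|H0]; first by exists j.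
    exfalso; move: Hr0; apply/negP; rewrite negbK; apply/eqP/matrixP => a b.
    by rewrite (ord1 a) [RHS]mxE; apply/eqP; exact: negbFE (H0 b).
  - have := Hc ord_max.
    under eq_bigr => j _ do rewrite HA1 mulr1.
    by [].
  - move=> i; case: (boolP (i \in T)) => Hi.
      have := Hc (lift ord_max (enum_rank_in Hi i)).
      under eq_bigr => j _ do rewrite HA2 (enum_rankK_in Hi Hi).
      by [].
    apply: big1 => j _.
    rewrite /ptR (@support n x k y lam Hl Hr i j) ?mulr0 //.
    by move: Hi; rewrite inE -eqn0Ngt => /eqP.
by apply: (Hmin m Hm).
Qed.


Lemma midpoint n (x z1 z2 : 'I_n -> nat) :
  is_partition z1 -> is_partition z2 -> z1 <> x -> z2 <> x ->
  (forall i, z1 i + z2 i = 2 * x i)%N -> conv_rep (R:=R) 2 x.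
Proof.
move=> H1 H2 N1 N2 Hs.
exists (fun j : 'I_2 => if j == ord0 then z1 else z2), (fun _ => 1 / 2).
split; first by move=> j; case: (j == ord0).
split; first by move=> j; case: (j == ord0).
split; first by move=> j; rewrite divr_gt0 // ltr0n.
split; first by rewrite !big_ord_recl big_ord0 /=; field.
move=> i; rewrite !big_ord_recl big_ord0 /= /ptR.
have : ((z1 i)%:R + (z2 i)%:R = 2 * (x i)%:R :> R) by rewrite -natrD Hs natrM.
move=> E; rewrite addr0; apply/eqP; rewrite -subr_eq0; apply/eqP.
have -> : 1 / 2 * (z1 i)%:R + 1 / 2 * (z2 i)%:R = ((z1 i)%:R + (z2 i)%:R) / 2 :> R by field.
by rewrite E mulrAC divff ?mul1r ?subrr // pnatr_eq0.
Qed.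

Lemma pow_bound n (x : 'I_n -> nat) k :
  is_partition x -> xi_eq (R:=R) x k -> (2 < k)%N ->
  (2 ^ #|[set i | 0 < x i]%N| <= n.+1)%N.
Proof.
move=> Hx [_ Hmin] Hk.
have no2 : ~ conv_rep (R:=R) 2 x by apply: Hmin.
set T := [set i | 0 < x i]%N.
pose f (S : {set 'I_n}) := (\sum_(i in S) i.+1)%N.
have fle : forall S : {set 'I_n}, S \subset T -> (f S <= n)%N.
  move=> S HS; rewrite -[X in (_ <= X)%N]Hx /f big_mkcond /=; apply: leq_sum => i _.
  case: ifP => // Hi; have := subsetP HS i Hi; rewrite inE => Hxi.
  by rewrite leq_pmulr.
have finj : {in powerset T &, injective f}.
  move=> S S'; rewrite !inE => HS HS' Heq.
  apply/eqP; apply/negPn/negP => Hne; apply: no2.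
  set A := S :\: S'; set B := S' :\: S.
  have HAB : f A = f B.
    move: Heq; rewrite /f (big_setID S') (big_setID S (A := S')) setIC.
    by move/addnI.
  have AT : forall i, i \in A -> (0 < x i)%N.
    move=> i; rewrite inE => /andP [_ Hi]; have := subsetP HS i Hi; by rewrite inE.
  have BT : forall i, i \in B -> (0 < x i)%N.
    move=> i; rewrite inE => /andP [_ Hi]; have := subsetP HS' i Hi; by rewrite inE.
  have disj : forall i, i \in A -> i \notin B.
    by move=> i; rewrite !inE => /andP [H1 H2]; rewrite H2.
  pose z1 i := if i \in A then (x i).-1 else if i \in B then (x i).+1 else x i.
  pose z2 i := if i \in B then (x i).-1 else if i \in A then (x i).+1 else x i.
  have P1 : is_partition z1.
    apply: (@addIn (f B)); rewrite -[X in (_ = X + _)%N]Hx -{1}HAB /is_partition /f !(big_mkcond (fun i => i \in _)) -!big_split /=.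
    apply: eq_bigr => i _; rewrite /z1.
    case: (boolP (i \in A)) => HiA.
      rewrite (negbTE (disj i HiA)); have := AT i HiA; case: (x i) => // m _ /=; rewrite mulnS; lia.
    case: (boolP (i \in B)) => HiB //; rewrite mulnS; lia.
  have P2 : is_partition z2.
    apply: (@addIn (f A)); rewrite -[X in (_ = X + _)%N]Hx {1}HAB /is_partition /f !(big_mkcond (fun i => i \in _)) -!big_split /=.
    apply: eq_bigr => i _; rewrite /z2.
    case: (boolP (i \in B)) => HiB.
      have HiA : i \notin A by apply: contraTN HiB => /disj.
      rewrite (negbTE HiA); have := BT i HiB; case: (x i) => // m _ /=; rewrite mulnS; lia.
    case: (boolP (i \in A)) => HiA //; rewrite mulnS; lia.
  have [i Hi] : exists i, (i \in A) || (i \in B).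
    case: (pickP (fun i => (i \in A) || (i \in B))) => [i H|H0]; first by exists i.
    exfalso; move/negP: Hne; apply; rewrite eqEsubset -!setD_eq0.
    by apply/andP; split; apply/eqP/setP => j; rewrite in_set0; have := H0 j => /negbT; rewrite negb_or => /andP [Ha Hb]; first [exact: negbTE Ha | exact: negbTE Hb].
  apply: (@midpoint n x z1 z2 P1 P2).
  - move=> E; have := congr1 (fun g => g i) E; rewrite /z1 /=.
    case/orP: Hi => Hi.
      by rewrite Hi; have := AT i Hi; case: (x i) => // m _ /= /n_Sn.
    rewrite Hi; have HiA : i \notin A by apply: contraTN Hi => /disj.
    by rewrite (negbTE HiA) => /esym/n_Sn.
  - move=> E; have := congr1 (fun g => g i) E; rewrite /z2 /=.
    case/orP: Hi => Hi.
      have HiB : i \notin B by apply: disj.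
      by rewrite (negbTE HiB) Hi => /esym/n_Sn.
    by rewrite Hi; have := BT i Hi; case: (x i) => // m _ /= /n_Sn.
  - move=> j; rewrite /z1 /z2.
    case: (boolP (j \in A)) => HjA.
      rewrite (negbTE (disj j HjA)); have := AT j HjA; case: (x j) => // m _ /=; lia.
    case: (boolP (j \in B)) => HjB //=; last by lia.
    have := BT j HjB; case: (x j) => // m _ /=; lia.
pose g (S : {set 'I_n}) : 'I_n.+1 := inord (f S).
have ginj : {in powerset T &, injective g}.
  move=> S S' HS HS' /(congr1 (@nat_of_ord _)); rewrite /g !inordK ?ltnS ?fle //.
  - by apply: finj.
  - by move: HS'; rewrite inE.
  - by move: HS; rewrite inE.
rewrite -card_powerset -(card_in_imset ginj).
by rewrite -[X in (_ <= X)%N]card_ord max_card.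
Qed.

End Aux.

Theorem theorem2 (R : realType) (n xi : nat) :
  (0 < n)%N -> (2 < xi)%N ->
  (exists x : 'I_n -> nat, @C_xi R n xi x) ->
  (xi%:R : R) <= ln (n.+1%:R : R) / ln 2 + 1.
Proof.
move=> n0 xi2 [x [Hp [_ Hxi]]].
have H1 := @dim_bound R n x xi Hxi.
have H2 := @pow_bound R n x xi Hp Hxi xi2.
have H3 : (2 ^ xi.-1 <= n.+1)%N.
  apply: leq_trans H2; apply: leq_pexp2l => //; by rewrite -ltnS prednK // (ltn_trans _ xi2).
have H4 : ((2 : R) ^+ xi.-1 <= n.+1%:R).
  by rewrite -natrX ler_nat.
have l2 : 0 < ln (2 : R) by apply: ln_gt0; rewrite ltr1n.
have H5 : ln ((2 : R) ^+ xi.-1) <= ln (n.+1%:R : R).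
  by rewrite ler_ln // posrE ?exprn_gt0 // ltr0n.
rewrite lnXn // in H5.
rewrite -[xi]prednK ?(ltn_trans _ xi2) // -addn1 natrD lerD2r ler_pdivlMr //.
rewrite mulr_natl; exact: H5.
Qed.
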